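(* Let $H$ be the system defined in the context, and suppose the underlying graph is a line (path) graph on $N\ge 2$ nodes, with edges $\{i,i+1\}$, $i=1,\dots,N-1$, having susceptances $b_{i,i+1}>0$. Let $\underline{b}$ be the arithmetic mean of these $N-1$ edge susceptances. Then $$\|H\|_2^2\le\frac{\alpha}{2}(N-1)\left(\frac{1}{k_P}+\frac{1}{\tau_Q\left(\frac{c_Q}{2\underline{b}}+k_Q\right)}\right).$$
   Context: $L_B$ is the weighted Laplacian of the graph with edge weights $b_{ik}$. Parameters: $k_P,\tau_P,k_Q,\tau_Q>0$, $\bar b\ge 0$, $c_Q=1+2k_Q\bar b$, $\alpha>0$. $H$ is the LTI system with state $\psi=(\delta,\omega,V)\in\mathbb{R}^{3N}$, input $\mathrm{w}\in\mathbb{R}^{2N}$, output $y$: $$\dot\psi=\begin{bmatrix}0 & I & 0\\ -\frac{k_P}{\tau_P}L_B & -\frac{1}{\tau_P}I & 0\\ 0 & 0 & -\frac{c_Q}{\tau_Q}I-\frac{k_Q}{\tau_Q}L_B\end{bmatrix}\psi+\begin{bmatrix}0&0\\ \frac{1}{\tau_P}I & 0\\ 0 & \frac{1}{\tau_Q}I\end{bmatrix}\mathrm{w},\qquad y=\begin{bmatrix}\sqrt{\alpha}L_B^{1/2} & 0 & 0\\ 0&0&\sqrt{\alpha}L_B^{1/2}\end{bmatrix}\psi,$$ and $\|H\|_2^2$ is the squared $\mathcal{H}_2$ norm of its transfer function (finite since the single zero mode is unobservable and all other modes are stable). *)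

(* Defs.v *)
From Stdlib Require Import Reals Lra Lia.
Open Scope R_scope.

Fixpoint rsum (n : nat) (f : nat -> R) : R :=
  match n with O => 0 | S k => rsum k f + f k end.

(* matrices are functions nat -> nat -> R; dimensions are carried separately *)
Definition Mat := nat -> nat -> R.

Definition mmul (k : nat) (A B : Mat) : Mat :=
  fun i j => rsum k (fun l => A i l * B l j).

Definition eye : Mat := fun i j => if Nat.eqb i j then 1 else 0.

(* ---------- graph: path graph on N nodes (0-indexed) ----------
   b i = susceptance of the edge {i, i+1}, i = 0 .. N-2. *)
Definition path_w (b : nat -> R) (i j : nat) : R :=
  if Nat.eqb j (S i) then b i else if Nat.eqb i (S j) then b j else 0.

Definition lapB (N : nat) (b : nat -> R) : Mat :=
  fun i j => if Nat.eqb i j then rsum N (fun k => path_w b i k)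
             else - path_w b i j.

Definition is_psd_sqrt (N : nat) (L S : Mat) : Prop :=
  (forall i j, (i < N)%nat -> (j < N)%nat -> S i j = S j i) /\
  (forall x : nat -> R,
      0 <= rsum N (fun i => rsum N (fun j => x i * S i j * x j))) /\
  (forall i j, (i < N)%nat -> (j < N)%nat -> mmul N S S i j = L i j).

Definition cQ (kQ bbar : R) : R := 1 + 2 * kQ * bbar.

(* ---------- the system H: state (delta, omega, V) in R^{3N} ---------- *)
Definition sysA (N : nat) (L : Mat) (kP tP kQ tQ bbar : R) : Mat :=
  fun i j =>
    if Nat.ltb i N then
      (if Nat.eqb j (N + i) then 1 else 0)
    else if Nat.ltb i (2 * N) then
      (if Nat.ltb j N then - (kP / tP) * L (i - N)%nat j
       else if Nat.ltb j (2 * N) then (if Nat.eqb i j then - (1 / tP) else 0)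
       else 0)
    else
      (if Nat.ltb j (2 * N) then 0
       else - (cQ kQ bbar / tQ) * eye (i - 2 * N)%nat (j - 2 * N)%nat
            - (kQ / tQ) * L (i - 2 * N)%nat (j - 2 * N)%nat).

Definition sysB (N : nat) (tP tQ : R) : Mat :=
  fun i j =>
    if Nat.ltb i N then 0
    else if Nat.ltb i (2 * N) then (if Nat.eqb j (i - N) then 1 / tP else 0)
    else (if Nat.eqb j (i - N) then 1 / tQ else 0).

Definition sysC (N : nat) (S : Mat) (alpha : R) : Mat :=
  fun i j =>
    if Nat.ltb i N then
      (if Nat.ltb j N then sqrt alpha * S i j else 0)
    else
      (if Nat.ltb j (2 * N) then 0 else sqrt alpha * S (i - N)%nat (j - 2 * N)%nat).

Definition is_exp_flow (n : nat) (A : Mat) (Phi : R -> Mat) : Prop :=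
  (forall i j, (i < n)%nat -> (j < n)%nat -> Phi 0 i j = eye i j) /\
  (forall t i j, (i < n)%nat -> (j < n)%nat ->
     derivable_pt_lim (fun s => Phi s i j) t (mmul n A (Phi t) i j)).

Definition impulse_sq (n m p : nat) (A B C : Mat) (Phi : R -> Mat) (t : R) : R :=
  rsum p (fun i => rsum m (fun j => (mmul n (mmul n C (Phi t)) B i j) ^ 2)).

(* v = ||H||_2^2 = \int_0^\infty ||C e^{At} B||_F^2 dt  (time-domain H2 norm),
   the improper integral expressed via an antiderivative G with G 0 = 0
   and G T -> v as T -> +infinity. *)
Definition is_H2sq (n m p : nat) (A B C : Mat) (v : R) : Prop :=
  exists Phi : R -> Mat, is_exp_flow n A Phi /\
  exists G : R -> R, G 0 = 0 /\
    (forall t, derivable_pt_lim G t (impulse_sq n m p A B C Phi t)) /\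
    (forall eps, 0 < eps -> exists M, forall T, M <= T -> Rabs (G T - v) < eps).

Definition H_is_H2sq (N : nat) (b : nat -> R) (S : Mat)
  (kP tP kQ tQ bbar alpha v : R) : Prop :=
  is_H2sq (3 * N) (2 * N) (2 * N)
    (sysA N (lapB N b) kP tP kQ tQ bbar) (sysB N tP tQ) (sysC N S alpha) v.

Definition bmean (N : nat) (b : nat -> R) : R := rsum (N - 1) b / INR (N - 1).

(* Main.v *)
Require Import Defs.
From Stdlib Require Import Reals Lra Lia Classical.
From Coquelicot Require Import Coquelicot.
From Stdlib Require Import Reals.
Open Scope R_scope.

Lemma rsum_ext n f g : (forall k, (k < n)%nat -> f k = g k) -> rsum n f = rsum n g.
Proof. induction n; intros H; simpl; auto. rewrite IHn by (intros; apply H; lia). rewrite H by lia. auto. Qed.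

Lemma rsum_plus n f g : rsum n (fun k => f k + g k) = rsum n f + rsum n g.
Proof. induction n; simpl; [lra|]. rewrite IHn; lra. Qed.

Lemma rsum_minus n f g : rsum n (fun k => f k - g k) = rsum n f - rsum n g.
Proof. induction n; simpl; [lra|]. rewrite IHn; lra. Qed.

Lemma rsum_scal n c f : rsum n (fun k => c * f k) = c * rsum n f.
Proof. induction n; simpl; [lra|]. rewrite IHn; lra. Qed.

Lemma rsum_scal_r n c f : rsum n (fun k => f k * c) = rsum n f * c.
Proof. induction n; simpl; [lra|]. rewrite IHn; lra. Qed.

Lemma rsum_zero n : rsum n (fun _ => 0) = 0.
Proof. induction n; simpl; [lra|]. rewrite IHn; lra. Qed.

Lemma rsum_const n c : rsum n (fun _ => c) = INR n * c.
Proof. induction n; simpl rsum; [simpl; lra|]. rewrite IHn, S_INR; lra. Qed.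

Lemma rsum_app a b f : rsum (a + b) f = rsum a f + rsum b (fun k => f (a + k)%nat).
Proof. induction b; simpl. rewrite Nat.add_0_r; lra.
 rewrite Nat.add_succ_r; simpl. rewrite IHb; lra. Qed.

Lemma rsum_comm n m (f : nat -> nat -> R) :
  rsum n (fun i => rsum m (fun j => f i j)) = rsum m (fun j => rsum n (fun i => f i j)).
Proof. induction n; simpl. rewrite rsum_zero; auto.
 rewrite IHn, <- rsum_plus. auto. Qed.

Lemma rsum_delta n j f : (j < n)%nat ->
  rsum n (fun k => if Nat.eqb k j then f k else 0) = f j.
Proof. induction n as [|n IHn]; intros H; [lia|]. simpl.
 destruct (Nat.eqb_spec n j).
 - subst. rewrite (rsum_ext _ _ (fun _ => 0)). rewrite rsum_zero; lra.
   intros k Hk. destruct (Nat.eqb_spec k j); [lia|auto].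
 - rewrite IHn by lia. lra. Qed.

Lemma rsum_nonneg n f : (forall k, (k < n)%nat -> 0 <= f k) -> 0 <= rsum n f.
Proof. induction n; intros H; simpl; [lra|]. assert (0 <= f n) by (apply H; lia).
 assert (0 <= rsum n f) by (apply IHn; intros; apply H; lia). lra. Qed.

Lemma rsum_le n f g : (forall k, (k < n)%nat -> f k <= g k) -> rsum n f <= rsum n g.
Proof. induction n; intros H; simpl; [lra|]. assert (f n <= g n) by (apply H; lia).
 assert (rsum n f <= rsum n g) by (apply IHn; intros; apply H; lia). lra. Qed.

Lemma rsum_abs n f : Rabs (rsum n f) <= rsum n (fun k => Rabs (f k)).
Proof. induction n; simpl. rewrite Rabs_R0; lra.
 eapply Rle_trans. apply Rabs_triang. lra. Qed.

Lemma deriv_rsum n (f : R -> nat -> R) (f' : nat -> R) t :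
  (forall k, (k < n)%nat -> derivable_pt_lim (fun s => f s k) t (f' k)) ->
  derivable_pt_lim (fun s => rsum n (f s)) t (rsum n f').
Proof. induction n; intros H; simpl.
 - apply derivable_pt_lim_const.
 - apply (derivable_pt_lim_plus (fun s => rsum n (f s)) (fun s => f s n)).
   apply IHn; intros; apply H; lia. apply H; lia. Qed.

Lemma cont_rsum n (f : R -> nat -> R) t :
  (forall k, (k < n)%nat -> continuity_pt (fun s => f s k) t) ->
  continuity_pt (fun s => rsum n (f s)) t.
Proof. induction n; intros H; simpl.
 - apply continuity_pt_const. intros x y; auto.
 - apply (continuity_pt_plus (fun s => rsum n (f s)) (fun s => f s n)).
   apply IHn; intros; apply H; lia. apply H; lia. Qed.

Ltac nat_cases := repeat match goal with
 | |- context [Nat.ltb ?a ?b] => destruct (Nat.ltb_spec a b); try (exfalso; lia)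
 | |- context [Nat.eqb ?a ?b] => destruct (Nat.eqb_spec a b); try (exfalso; lia)
 end.

Definition dot (N : nat) (x y : nat -> R) : R := rsum N (fun i => x i * y i).
Definition mv (N : nat) (M : Mat) (x : nat -> R) : nat -> R :=
  fun i => rsum N (fun j => M i j * x j).
Definition avg (N : nat) (x : nat -> R) : R := rsum N x / INR N.
Definition Pi (N : nat) (x : nat -> R) : nat -> R := fun i => x i - avg N x.
Definition msym (N : nat) (M : Mat) := forall i j, (i < N)%nat -> (j < N)%nat -> M i j = M j i.

Lemma dot_ext N x y x' y' : (forall i, (i < N)%nat -> x i = x' i) ->
  (forall i, (i < N)%nat -> y i = y' i) -> dot N x y = dot N x' y'.
Proof. intros H1 H2; unfold dot; apply rsum_ext; intros; rewrite H1, H2; auto. Qed.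

Lemma dot_comm N x y : dot N x y = dot N y x.
Proof. unfold dot; apply rsum_ext; intros; ring. Qed.

Lemma dot_nonneg N x : 0 <= dot N x x.
Proof. unfold dot; apply rsum_nonneg; intros; nra. Qed.

Lemma mv_ext N M x y : (forall i, (i < N)%nat -> x i = y i) -> forall i, mv N M x i = mv N M y i.
Proof. intros H i; unfold mv; apply rsum_ext; intros; rewrite H; auto. Qed.

Lemma dot_sym N M x y : msym N M -> dot N x (mv N M y) = dot N (mv N M x) y.
Proof. intros HM. unfold dot, mv.
 transitivity (rsum N (fun i => rsum N (fun j => x i * M i j * y j))).
 apply rsum_ext; intros. rewrite <- rsum_scal. apply rsum_ext; intros; ring.
 rewrite rsum_comm. apply rsum_ext; intros. rewrite <- rsum_scal_r. apply rsum_ext; intros.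
 rewrite HM by auto; ring. Qed.

Lemma rsum_mv_zero N M x : msym N M -> (forall i, (i < N)%nat -> rsum N (fun j => M i j) = 0) ->
  rsum N (mv N M x) = 0.
Proof. intros HS HR. unfold mv. rewrite rsum_comm.
 rewrite (rsum_ext _ _ (fun j => x j * rsum N (fun i => M j i))).
 rewrite (rsum_ext _ _ (fun _ => 0)). apply rsum_zero.
 intros; rewrite HR by auto; ring.
 intros. rewrite <- rsum_scal. apply rsum_ext; intros. rewrite HS by auto; ring. Qed.

Lemma rsum_Pi N x : (0 < N)%nat -> rsum N (Pi N x) = 0.
Proof. intros HN. unfold Pi, avg. rewrite rsum_minus, rsum_const.
 assert (0 < INR N) by (apply lt_0_INR; auto). field; lra. Qed.

Lemma dot_Pi_l N x y : dot N (Pi N x) y = dot N x y - avg N x * rsum N y.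
Proof. unfold dot, Pi. rewrite <- rsum_scal, <- rsum_minus. apply rsum_ext; intros; ring. Qed.

Lemma dot_Pi_l0 N x y : rsum N y = 0 -> dot N (Pi N x) y = dot N x y.
Proof. intros H; rewrite dot_Pi_l, H; ring. Qed.

Lemma Pi_zero_sum N y : rsum N y = 0 -> forall i, Pi N y i = y i.
Proof. intros H i; unfold Pi, avg; rewrite H; unfold Rdiv; ring. Qed.

Lemma dot_PiPi N x : (0 < N)%nat -> dot N (Pi N x) (Pi N x) = dot N (Pi N x) x.
Proof. intros HN. rewrite (dot_Pi_l N x (Pi N x)), rsum_Pi by auto. rewrite dot_comm. ring. Qed.

Lemma deriv_mv N M (x : R -> nat -> R) x' t i :
  (forall k, (k < N)%nat -> derivable_pt_lim (fun s => x s k) t (x' k)) ->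
  derivable_pt_lim (fun s => mv N M (x s) i) t (mv N M x' i).
Proof. intros H. unfold mv. apply (deriv_rsum N (fun s j => M i j * x s j)).
 intros. apply derivable_pt_lim_scal. apply H; auto. Qed.

Lemma deriv_dot N (x y : R -> nat -> R) x' y' t :
  (forall k, (k < N)%nat -> derivable_pt_lim (fun s => x s k) t (x' k)) ->
  (forall k, (k < N)%nat -> derivable_pt_lim (fun s => y s k) t (y' k)) ->
  derivable_pt_lim (fun s => dot N (x s) (y s)) t (dot N x' (y t) + dot N (x t) y').
Proof. intros Hx Hy. unfold dot. rewrite <- rsum_plus.
 apply (deriv_rsum N (fun s k => x s k * y s k)). intros.
 apply (derivable_pt_lim_mult (fun s => x s k) (fun s => y s k)); auto. Qed.

Lemma deriv_quadL N L (x : R -> nat -> R) x' t : msym N L ->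
  (forall k, (k < N)%nat -> derivable_pt_lim (fun s => x s k) t (x' k)) ->
  derivable_pt_lim (fun s => dot N (x s) (mv N L (x s))) t (2 * dot N x' (mv N L (x t))).
Proof. intros HL Hx.
 replace (2 * dot N x' (mv N L (x t))) with (dot N x' (mv N L (x t)) + dot N (x t) (mv N L x')).
 apply (deriv_dot N x (fun s => mv N L (x s))); auto.
 intros; apply deriv_mv; auto.
 rewrite (dot_sym N L (x t) x') by auto. rewrite (dot_comm N (mv N L (x t))). ring. Qed.

Lemma deriv_Pi N (x : R -> nat -> R) x' t i : (i < N)%nat ->
  (forall k, (k < N)%nat -> derivable_pt_lim (fun s => x s k) t (x' k)) ->
  derivable_pt_lim (fun s => Pi N (x s) i) t (Pi N x' i).
Proof. intros Hi H. unfold Pi, avg.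
 apply (derivable_pt_lim_minus (fun s => x s i) (fun s => rsum N (x s) / INR N)).
 apply H; auto.
 unfold Rdiv. apply (derivable_pt_lim_scal_right (fun s => rsum N (x s))).
 apply deriv_rsum; auto.
Qed.

Lemma deriv_PiPi N (x : R -> nat -> R) x' t :
  (forall k, (k < N)%nat -> derivable_pt_lim (fun s => x s k) t (x' k)) ->
  derivable_pt_lim (fun s => dot N (Pi N (x s)) (Pi N (x s))) t (2 * dot N (Pi N (x t)) (Pi N x')).
Proof. intros H.
 replace (2 * dot N (Pi N (x t)) (Pi N x')) with (dot N (Pi N x') (Pi N (x t)) + dot N (Pi N (x t)) (Pi N x'))
  by (rewrite dot_comm; ring).
 apply (deriv_dot N (fun s => Pi N (x s)) (fun s => Pi N (x s))); intros; apply deriv_Pi; auto.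
Qed.

Definition Uv (N : nat) (gam : R) (z : nat -> R) : nat -> R := fun i => gam * z i + z (N + i)%nat.
Definition Yv (N : nat) (z : nat -> R) : nat -> R := fun i => z (N + i)%nat.
Definition Vv (N : nat) (z : nat -> R) : nat -> R := fun i => z (N + N + i)%nat.

Definition qf N L kap gam tQ u w alpha (z : nat -> R) :=
  alpha/(2*gam) * dot N z (mv N L z)
  + alpha/(2*kap*gam) * dot N (Pi N (Uv N gam z)) (Pi N (Uv N gam z))
  + alpha*tQ/2 * (u * dot N (Vv N z) (mv N L (Vv N z)) + w * dot N (Pi N (Vv N z)) (Pi N (Vv N z))).

Definition cz N L alpha (z : nat -> R) :=
  alpha * (dot N z (mv N L z) + dot N (Vv N z) (mv N L (Vv N z))).

Definition Dqf N L kap gam tQ u w alpha (z z' : nat -> R) :=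
  alpha/(2*gam) * (2 * dot N z' (mv N L z))
  + alpha/(2*kap*gam) * (2 * dot N (Pi N (Uv N gam z)) (Pi N (Uv N gam z')))
  + alpha*tQ/2 * (u * (2 * dot N (Vv N z') (mv N L (Vv N z)))
                  + w * (2 * dot N (Pi N (Vv N z)) (Pi N (Vv N z')))).

Lemma dl_plus f g a b t : derivable_pt_lim f t a -> derivable_pt_lim g t b ->
  derivable_pt_lim (fun s => f s + g s) t (a + b).
Proof. intros; apply (derivable_pt_lim_plus f g); auto. Qed.
Lemma dl_scal c f a t : derivable_pt_lim f t a ->
  derivable_pt_lim (fun s => c * f s) t (c * a).
Proof. intros; apply (derivable_pt_lim_scal f); auto. Qed.

Lemma deriv_qf N L kap gam tQ u w alpha (z : R -> nat -> R) z' t : msym N L ->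
  (forall l, (l < N + N + N)%nat -> derivable_pt_lim (fun s => z s l) t (z' l)) ->
  derivable_pt_lim (fun s => qf N L kap gam tQ u w alpha (z s)) t
    (Dqf N L kap gam tQ u w alpha (z t) z').
Proof. intros HL Hz. unfold qf, Dqf.
 apply dl_plus. apply dl_plus.
 - apply dl_scal. apply deriv_quadL; auto. intros; apply Hz; lia.
 - apply dl_scal. apply (deriv_PiPi N (fun s => Uv N gam (z s))). intros. unfold Uv.
   apply dl_plus. apply dl_scal. apply Hz; lia. apply Hz; lia.
 - apply dl_scal. apply dl_plus; apply dl_scal.
   apply (deriv_quadL N L (fun s => Vv N (z s))); auto. intros; unfold Vv; apply Hz; lia.
   apply (deriv_PiPi N (fun s => Vv N (z s))). intros; unfold Vv; apply Hz; lia.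
Qed.

Lemma Pi_ext N x y : (forall i, (i < N)%nat -> x i = y i) -> forall i, (i < N)%nat -> Pi N x i = Pi N y i.
Proof. intros H i Hi. unfold Pi, avg. rewrite H by auto. rewrite (rsum_ext N x y) by auto. auto. Qed.

Definition Dm (cq kq m : R) := cq + kq * m.
Definition uu (cq kq m : R) := cq / (Dm cq kq m)^2.
Definition ww (cq kq m : R) := kq * m^2 / (Dm cq kq m)^2.

Lemma alg_ineq N L kap gam tQ cq kq m alpha (z z' : nat -> R) :
  (0 < N)%nat -> msym N L -> (forall i, (i < N)%nat -> rsum N (fun j => L i j) = 0) ->
  0 < kap -> 0 < gam -> 0 < tQ -> 0 < cq -> 0 < kq -> 0 < m -> 0 < alpha ->
  (forall i, (i < N)%nat -> z' i = z (N + i)%nat) ->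
  (forall i, (i < N)%nat -> z' (N + i)%nat = - kap * mv N L z i - gam * z (N + i)%nat) ->
  (forall i, (i < N)%nat -> z' (N + N + i)%nat = - (cq / tQ) * z (N + N + i)%nat - (kq / tQ) * mv N L (Vv N z) i) ->
  Dqf N L kap gam tQ (uu cq kq m) (ww cq kq m) alpha z z' + cz N L alpha z <= 0.
Proof. intros HN HS HR Hk Hg Ht Hc Hq Hm Ha H1 H2 H3.
 set (V := Vv N z). set (LV := mv N L V). set (Lz := mv N L z).
 assert (HLz0 : rsum N Lz = 0) by (apply rsum_mv_zero; auto).
 assert (HLV0 : rsum N LV = 0) by (apply rsum_mv_zero; auto).
 assert (E1 : dot N z' Lz = dot N (Yv N z) Lz).
 { apply dot_ext; auto. }
 assert (E2 : dot N (Pi N (Uv N gam z)) (Pi N (Uv N gam z')) = - kap * (gam * dot N z Lz + dot N (Yv N z) Lz)).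
 { rewrite (dot_ext N (Pi N (Uv N gam z)) (Pi N (Uv N gam z')) (Pi N (Uv N gam z)) (fun i => - kap * Lz i)); auto.
   - transitivity (-kap * dot N (Pi N (Uv N gam z)) Lz).
     { unfold dot; rewrite <- rsum_scal; apply rsum_ext; intros; ring. }
     rewrite dot_Pi_l0 by auto.
     assert (dot N (Uv N gam z) Lz = gam * dot N z Lz + dot N (Yv N z) Lz) as ->.
     { unfold dot, Uv, Yv. rewrite <- rsum_scal, <- rsum_plus. apply rsum_ext; intros; ring. }
     auto.
   - intros i Hi. rewrite (Pi_ext N (Uv N gam z') (fun i => - kap * Lz i)); auto.
     rewrite Pi_zero_sum; auto. rewrite rsum_scal, HLz0; ring.
     intros j Hj; unfold Uv; rewrite (H1 j Hj), (H2 j Hj); unfold Lz; ring. }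
 assert (E3 : dot N (Vv N z') LV = - (cq / tQ) * dot N V LV - (kq / tQ) * dot N LV LV).
 { unfold dot. rewrite <- !rsum_scal, <- rsum_minus. apply rsum_ext; intros. unfold Vv. rewrite H3 by auto. fold V LV. unfold V, Vv. ring. }
 assert (E4 : dot N (Pi N V) (Pi N (Vv N z')) = - (cq / tQ) * dot N (Pi N V) (Pi N V) - (kq / tQ) * dot N V LV).
 { rewrite dot_comm, dot_Pi_l0 by (apply rsum_Pi; auto).
   rewrite (dot_ext N (Vv N z') (Pi N V) (fun i => - (cq / tQ) * V i - (kq / tQ) * LV i) (Pi N V)); auto.
   assert (dot N (fun i => - (cq / tQ) * V i - (kq / tQ) * LV i) (Pi N V) =
      - (cq / tQ) * dot N V (Pi N V) - (kq / tQ) * dot N LV (Pi N V)) as ->.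
   { unfold dot. rewrite <- !rsum_scal, <- rsum_minus. apply rsum_ext; intros; ring. }
   rewrite (dot_comm N V), (dot_comm N LV), dot_PiPi, (dot_Pi_l0 N V LV) by auto. auto. }
 assert (Enn : 0 <= dot N LV LV - 2 * m * dot N V LV + m^2 * dot N (Pi N V) (Pi N V)).
 { assert (HH := dot_nonneg N (fun i => LV i - m * Pi N V i)).
   rewrite <- (dot_Pi_l0 N V LV HLV0) in *.
   unfold dot in *. rewrite <- !rsum_scal, <- rsum_minus, <- rsum_plus.
   rewrite (rsum_ext _ _ (fun k => (LV k - m * Pi N V k) * (LV k - m * Pi N V k))); auto.
   intros; ring. }
 unfold Dqf, cz. fold V LV Lz. rewrite E1, E2, E3, E4.
 set (aX := dot N z Lz) in *. set (yX := dot N (Yv N z) Lz) in *.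
 set (aV := dot N V LV) in *. set (eV := dot N LV LV) in *. set (pV := dot N (Pi N V) (Pi N V)) in *.
 unfold uu, ww, Dm.
 assert (HD : 0 < cq + kq * m) by nra.
 match goal with |- ?e <= 0 => replace e with (- alpha * kq * (cq / (cq + kq*m)^2) * (eV - 2 * m * aV + m^2 * pV)) end.
 assert (0 < cq / (cq + kq * m)^2) by (apply Rdiv_lt_0_compat; nra).
 assert (0 < alpha * kq * (cq / (cq + kq*m)^2)) by (apply Rmult_lt_0_compat; nra).
 nra.
 field. lra.
Qed.



Lemma rsum3 N f : rsum (3 * N) f = rsum N f + rsum N (fun k => f (N + k)%nat) + rsum N (fun k => f (N + N + k)%nat).
Proof. replace (3 * N)%nat with (N + N + N)%nat by lia. rewrite !rsum_app. auto. Qed.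

Lemma rsum2 N f : rsum (2 * N) f = rsum N f + rsum N (fun k => f (N + k)%nat).
Proof. replace (2 * N)%nat with (N + N)%nat by lia. rewrite !rsum_app. auto. Qed.

Lemma rsum3_ext N f g1 g2 g3 : (forall k, (k < N)%nat -> f k = g1 k) ->
  (forall k, (k < N)%nat -> f (N + k)%nat = g2 k) -> (forall k, (k < N)%nat -> f (N + N + k)%nat = g3 k) ->
  rsum (3 * N) f = rsum N g1 + rsum N g2 + rsum N g3.
Proof. intros H1 H2 H3. rewrite rsum3. f_equal; [f_equal|]; apply rsum_ext; auto. Qed.

Lemma subK a b : (a + b - a = b)%nat. Proof. lia. Qed.
Lemma subK2 a b : (a + a + b - 2 * a = b)%nat. Proof. lia. Qed.

Lemma EA1 N L kP tP kQ tQ bbar z i : (i < N)%nat ->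
  rsum (3 * N) (fun k => sysA N L kP tP kQ tQ bbar i k * z k) = z (N + i)%nat.
Proof. intros Hi. unfold sysA.
 rewrite (rsum3_ext N _ (fun _ => 0) (fun k => if Nat.eqb k i then z (N + k)%nat else 0) (fun _ => 0)).
 rewrite rsum_delta by auto. rewrite !rsum_zero. ring.
 all: intros k Hk; nat_cases; try ring.
Qed.

Lemma EA2 N L kP tP kQ tQ bbar z i : (i < N)%nat ->
  rsum (3 * N) (fun k => sysA N L kP tP kQ tQ bbar (N + i)%nat k * z k) =
  - (kP / tP) * mv N L z i - (1 / tP) * z (N + i)%nat.
Proof. intros Hi. unfold sysA.
 rewrite (rsum3_ext N _ (fun k => - (kP / tP) * (L i k * z k)) (fun k => if Nat.eqb k i then - (1 / tP) * z (N + k)%nat else 0) (fun _ => 0)).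
 rewrite rsum_delta by auto. rewrite !rsum_zero, rsum_scal. unfold mv. ring.
 all: intros k Hk; nat_cases; rewrite ?subK; try ring.
Qed.

Lemma EA3 N L kP tP kQ tQ bbar z i : (i < N)%nat ->
  rsum (3 * N) (fun k => sysA N L kP tP kQ tQ bbar (N + N + i)%nat k * z k) =
  - (cQ kQ bbar / tQ) * z (N + N + i)%nat - (kQ / tQ) * mv N L (Vv N z) i.
Proof. intros Hi. unfold sysA.
 rewrite (rsum3_ext N _ (fun _ => 0) (fun _ => 0) (fun k => (if Nat.eqb k i then - (cQ kQ bbar / tQ) * z (N + N + k)%nat else 0) - (kQ / tQ) * (L i k * Vv N z k))).
 rewrite rsum_minus, rsum_delta by auto. rewrite !rsum_zero, rsum_scal. unfold mv. ring.
 all: intros k Hk; nat_cases; rewrite ?subK2; unfold eye, Vv; nat_cases; try ring.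
Qed.

Lemma EB1 N tP tQ (M : Mat) i j : (j < N)%nat ->
  rsum (3 * N) (fun l => M i l * sysB N tP tQ l j) = M i (N + j)%nat * (1 / tP).
Proof. intros Hj. unfold sysB.
 rewrite (rsum3_ext N _ (fun _ => 0) (fun k => if Nat.eqb k j then M i (N + k)%nat * (1 / tP) else 0) (fun _ => 0)).
 rewrite rsum_delta by auto. rewrite !rsum_zero. ring.
 all: intros k Hk; nat_cases; try ring.
Qed.

Lemma EB2 N tP tQ (M : Mat) i j : (j < N)%nat ->
  rsum (3 * N) (fun l => M i l * sysB N tP tQ l (N + j)%nat) = M i (N + N + j)%nat * (1 / tQ).
Proof. intros Hj. unfold sysB.
 rewrite (rsum3_ext N _ (fun _ => 0) (fun _ => 0) (fun k => if Nat.eqb k j then M i (N + N + k)%nat * (1 / tQ) else 0)).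
 rewrite rsum_delta by auto. rewrite !rsum_zero. ring.
 all: intros k Hk; nat_cases; try ring.
Qed.

Lemma EC1 N S alpha z i : (i < N)%nat ->
  rsum (3 * N) (fun l => sysC N S alpha i l * z l) = sqrt alpha * mv N S z i.
Proof. intros Hi. unfold sysC.
 rewrite (rsum3_ext N _ (fun k => sqrt alpha * (S i k * z k)) (fun _ => 0) (fun _ => 0)).
 rewrite !rsum_zero, rsum_scal. unfold mv. ring.
 all: intros k Hk; nat_cases; try ring.
Qed.

Lemma EC2 N S alpha z i : (i < N)%nat ->
  rsum (3 * N) (fun l => sysC N S alpha (N + i)%nat l * z l) = sqrt alpha * mv N S (Vv N z) i.
Proof. intros Hi. unfold sysC.
 rewrite (rsum3_ext N _ (fun _ => 0) (fun _ => 0) (fun k => sqrt alpha * (S i k * Vv N z k))).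
 rewrite !rsum_zero, rsum_scal. unfold mv. ring.
 all: intros k Hk; nat_cases; rewrite ?subK, ?subK2; unfold Vv; try ring.
Qed.

Definition col (Phi : R -> Mat) (t : R) (c : nat) : nat -> R := fun l => Phi t l c.

Lemma sq_S N S L x : msym N S -> (forall i j, (i < N)%nat -> (j < N)%nat -> mmul N S S i j = L i j) ->
  dot N (mv N S x) (mv N S x) = dot N x (mv N L x).
Proof. intros HS HSS. rewrite <- dot_sym by auto. apply dot_ext; auto.
 intros i Hi. unfold mv. 
 transitivity (rsum N (fun j => rsum N (fun k => S i j * S j k * x k))).
 apply rsum_ext; intros. rewrite <- rsum_scal. apply rsum_ext; intros; ring.
 rewrite rsum_comm. apply rsum_ext; intros k Hk. rewrite <- HSS by auto. unfold mmul.
 rewrite <- rsum_scal_r. auto. Qed.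

Lemma rsum2_ext N f g1 g2 : (forall k, (k < N)%nat -> f k = g1 k) ->
  (forall k, (k < N)%nat -> f (N + k)%nat = g2 k) ->
  rsum (2 * N) f = rsum N g1 + rsum N g2.
Proof. intros H1 H2. rewrite rsum2. f_equal; apply rsum_ext; auto. Qed.

Lemma sum_sq_col N S alpha L (Phi : R -> Mat) t c : 0 <= alpha -> msym N S ->
  (forall i j, (i < N)%nat -> (j < N)%nat -> mmul N S S i j = L i j) ->
  rsum (2 * N) (fun i => (mmul (3 * N) (sysC N S alpha) (Phi t) i c) ^ 2) = cz N L alpha (col Phi t c).
Proof. intros Ha HS HSS. unfold mmul.
 rewrite (rsum2_ext N _ (fun i => alpha * (mv N S (col Phi t c) i * mv N S (col Phi t c) i))
   (fun i => alpha * (mv N S (Vv N (col Phi t c)) i * mv N S (Vv N (col Phi t c)) i))).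
 rewrite !rsum_scal. unfold cz. fold (dot N (mv N S (col Phi t c)) (mv N S (col Phi t c))).
 fold (dot N (mv N S (Vv N (col Phi t c))) (mv N S (Vv N (col Phi t c)))).
 rewrite !(sq_S N S L) by auto. ring.
 - intros i Hi. transitivity ((rsum (3 * N) (fun l => sysC N S alpha i l * col Phi t c l))^2); [reflexivity|].
   rewrite (EC1 N S alpha (col Phi t c) i Hi). rewrite <- Rsqr_pow2. unfold Rsqr.
   replace (sqrt alpha * mv N S (col Phi t c) i * (sqrt alpha * mv N S (col Phi t c) i))
     with (sqrt alpha * sqrt alpha * (mv N S (col Phi t c) i * mv N S (col Phi t c) i)) by ring.
   rewrite sqrt_sqrt; auto.
 - intros i Hi. transitivity ((rsum (3 * N) (fun l => sysC N S alpha (N + i)%nat l * col Phi t c l))^2); [reflexivity|].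
   rewrite (EC2 N S alpha (col Phi t c) i Hi). rewrite <- Rsqr_pow2. unfold Rsqr.
   replace (sqrt alpha * mv N S (Vv N (col Phi t c)) i * (sqrt alpha * mv N S (Vv N (col Phi t c)) i))
     with (sqrt alpha * sqrt alpha * (mv N S (Vv N (col Phi t c)) i * mv N S (Vv N (col Phi t c)) i)) by ring.
   rewrite sqrt_sqrt; auto.
Qed.

Lemma impulse_eq N S L alpha A tP tQ (Phi : R -> Mat) t : 0 <= alpha -> msym N S ->
  (forall i j, (i < N)%nat -> (j < N)%nat -> mmul N S S i j = L i j) ->
  impulse_sq (3 * N) (2 * N) (2 * N) A (sysB N tP tQ) (sysC N S alpha) Phi t =
  rsum N (fun j => (1 / tP)^2 * cz N L alpha (col Phi t (N + j)%nat))
  + rsum N (fun j => (1 / tQ)^2 * cz N L alpha (col Phi t (N + N + j)%nat)).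
Proof. intros Ha HS HSS. unfold impulse_sq.
 set (M := mmul (3 * N) (sysC N S alpha) (Phi t)).
 rewrite (rsum_ext (2 * N) _ (fun i => rsum N (fun j => (1/tP)^2 * (M i (N+j)%nat)^2) + rsum N (fun j => (1/tQ)^2 * (M i (N+N+j)%nat)^2))).
 2:{ intros i Hi; apply rsum2_ext; intros j Hj; unfold mmul at 1.
     - rewrite EB1 by auto. ring.
     - rewrite EB2 by auto. ring. }
 rewrite rsum_plus.
 rewrite (rsum_comm (2 * N) N (fun i j => (1/tP)^2 * (M i (N+j)%nat)^2)).
 rewrite (rsum_comm (2 * N) N (fun i j => (1/tQ)^2 * (M i (N+N+j)%nat)^2)).
 f_equal; apply rsum_ext; intros j Hj; rewrite rsum_scal; unfold M; rewrite (sum_sq_col N S alpha L); auto.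
Qed.

Definition zd N A (Phi : R -> Mat) t c : nat -> R := fun l => mmul (3 * N) A (Phi t) l c.

Lemma qf_nonneg N L kap gam tQ u w alpha z : (0 < N)%nat ->
  (forall x, 0 <= dot N x (mv N L x)) -> 0 < kap -> 0 < gam -> 0 < tQ -> 0 <= u -> 0 <= w -> 0 < alpha ->
  0 <= qf N L kap gam tQ u w alpha z.
Proof. intros HN HP Hk Hg Ht Hu Hw Ha. unfold qf.
 assert (0 <= alpha/(2*gam)) by (apply Rlt_le, Rdiv_lt_0_compat; lra).
 assert (0 <= alpha/(2*kap*gam)) by (apply Rlt_le, Rdiv_lt_0_compat; nra).
 assert (0 <= alpha*tQ/2) by (apply Rlt_le, Rdiv_lt_0_compat; nra).
 pose proof (HP z). pose proof (HP (Vv N z)). pose proof (dot_nonneg N (Pi N (Uv N gam z))).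
 pose proof (dot_nonneg N (Pi N (Vv N z))).
 apply Rplus_le_le_0_compat; [apply Rplus_le_le_0_compat|]; try (apply Rmult_le_pos; auto).
 apply Rplus_le_le_0_compat; apply Rmult_le_pos; auto.
Qed.

Lemma col_step N L kP tP kQ tQ bbar m alpha (Phi : R -> Mat) t c :
  (0 < N)%nat -> msym N L -> (forall i, (i < N)%nat -> rsum N (fun j => L i j) = 0) ->
  0 < kP -> 0 < tP -> 0 < kQ -> 0 < tQ -> 0 <= bbar -> 0 < m -> 0 < alpha ->
  is_exp_flow (3 * N) (sysA N L kP tP kQ tQ bbar) Phi -> (c < 3 * N)%nat ->
  derivable_pt_lim (fun s => qf N L (kP/tP) (1/tP) tQ (uu (cQ kQ bbar) kQ m) (ww (cQ kQ bbar) kQ m) alpha (col Phi s c)) t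
    (Dqf N L (kP/tP) (1/tP) tQ (uu (cQ kQ bbar) kQ m) (ww (cQ kQ bbar) kQ m) alpha (col Phi t c) (zd N (sysA N L kP tP kQ tQ bbar) Phi t c))
  /\ Dqf N L (kP/tP) (1/tP) tQ (uu (cQ kQ bbar) kQ m) (ww (cQ kQ bbar) kQ m) alpha (col Phi t c) (zd N (sysA N L kP tP kQ tQ bbar) Phi t c)
     + cz N L alpha (col Phi t c) <= 0.
Proof. intros HN HS HR HkP HtP HkQ HtQ Hb Hm Ha [_ Hfl] Hc. split.
 - apply (deriv_qf N L _ _ _ _ _ _ (fun s => col Phi s c)); auto. intros l Hl. unfold col, zd. apply Hfl; lia.
 - assert (0 < cQ kQ bbar) by (unfold cQ; nra).
   apply alg_ineq; auto; try (apply Rdiv_lt_0_compat; lra).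
   + intros i Hi. unfold zd, mmul. apply (EA1 N L kP tP kQ tQ bbar (col Phi t c)); auto.
   + intros i Hi. unfold zd, mmul. rewrite (EA2 N L kP tP kQ tQ bbar (col Phi t c)); auto.
   + intros i Hi. unfold zd, mmul. rewrite (EA3 N L kP tP kQ tQ bbar (col Phi t c)); auto.
Qed.

Definition hq N L kP tP kQ tQ bbar m alpha (Phi : R -> Mat) s :=
  rsum N (fun j => (1/tP)^2 * qf N L (kP/tP) (1/tP) tQ (uu (cQ kQ bbar) kQ m) (ww (cQ kQ bbar) kQ m) alpha (col Phi s (N + j)%nat))
  + rsum N (fun j => (1/tQ)^2 * qf N L (kP/tP) (1/tP) tQ (uu (cQ kQ bbar) kQ m) (ww (cQ kQ bbar) kQ m) alpha (col Phi s (N + N + j)%nat)).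

Definition hd N L kP tP kQ tQ bbar m alpha (Phi : R -> Mat) t :=
  rsum N (fun j => (1/tP)^2 * Dqf N L (kP/tP) (1/tP) tQ (uu (cQ kQ bbar) kQ m) (ww (cQ kQ bbar) kQ m) alpha (col Phi t (N + j)%nat) (zd N (sysA N L kP tP kQ tQ bbar) Phi t (N + j)%nat))
  + rsum N (fun j => (1/tQ)^2 * Dqf N L (kP/tP) (1/tP) tQ (uu (cQ kQ bbar) kQ m) (ww (cQ kQ bbar) kQ m) alpha (col Phi t (N + N + j)%nat) (zd N (sysA N L kP tP kQ tQ bbar) Phi t (N + N + j)%nat)).

Lemma G_bound N L S kP tP kQ tQ bbar m alpha (Phi : R -> Mat) (G : R -> R) :
  (0 < N)%nat -> msym N L -> (forall i, (i < N)%nat -> rsum N (fun j => L i j) = 0) ->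
  (forall x, 0 <= dot N x (mv N L x)) ->
  msym N S -> (forall i j, (i < N)%nat -> (j < N)%nat -> mmul N S S i j = L i j) ->
  0 < kP -> 0 < tP -> 0 < kQ -> 0 < tQ -> 0 <= bbar -> 0 < m -> 0 < alpha ->
  is_exp_flow (3 * N) (sysA N L kP tP kQ tQ bbar) Phi ->
  G 0 = 0 ->
  (forall t, derivable_pt_lim G t (impulse_sq (3 * N) (2 * N) (2 * N) (sysA N L kP tP kQ tQ bbar) (sysB N tP tQ) (sysC N S alpha) Phi t)) ->
  forall T, 0 <= T -> G T <= hq N L kP tP kQ tQ bbar m alpha Phi 0.
Proof. intros HN HS HR HP HSs HSS HkP HtP HkQ HtQ Hb Hm Ha Hfl HG0 HG T HT.
 assert (Hcq : 0 < cQ kQ bbar) by (unfold cQ; nra).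
 assert (Hu : 0 <= uu (cQ kQ bbar) kQ m) by (unfold uu, Dm; apply Rlt_le, Rdiv_lt_0_compat; [lra| apply pow_lt; nra]).
 assert (Hw : 0 <= ww (cQ kQ bbar) kQ m) by (unfold ww, Dm; apply Rlt_le, Rdiv_lt_0_compat; [apply Rmult_lt_0_compat; [lra|apply pow_lt; lra]| apply pow_lt; nra]).
 assert (Hpos : forall s, 0 <= hq N L kP tP kQ tQ bbar m alpha Phi s).
 { intros s. unfold hq. apply Rplus_le_le_0_compat; apply rsum_nonneg; intros; apply Rmult_le_pos;
   try (apply pow_le; apply Rlt_le, Rdiv_lt_0_compat; lra);
   apply qf_nonneg; auto; try (apply Rdiv_lt_0_compat; lra). }
 assert (Hh : forall t, derivable_pt_lim (hq N L kP tP kQ tQ bbar m alpha Phi) t (hd N L kP tP kQ tQ bbar m alpha Phi t)).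
 { intros t. unfold hq, hd. apply dl_plus.
   - apply (deriv_rsum N (fun s j => (1/tP)^2 * qf N L (kP/tP) (1/tP) tQ (uu (cQ kQ bbar) kQ m) (ww (cQ kQ bbar) kQ m) alpha (col Phi s (N + j)%nat))).
     intros j Hj. apply dl_scal. apply (col_step N L kP tP kQ tQ bbar m alpha Phi t (N + j)%nat); auto; lia.
   - apply (deriv_rsum N (fun s j => (1/tQ)^2 * qf N L (kP/tP) (1/tP) tQ (uu (cQ kQ bbar) kQ m) (ww (cQ kQ bbar) kQ m) alpha (col Phi s (N + N + j)%nat))).
     intros j Hj. apply dl_scal. apply (col_step N L kP tP kQ tQ bbar m alpha Phi t (N + N + j)%nat); auto; lia. }
 assert (Hle : forall t, impulse_sq (3 * N) (2 * N) (2 * N) (sysA N L kP tP kQ tQ bbar) (sysB N tP tQ) (sysC N S alpha) Phi t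
                  + hd N L kP tP kQ tQ bbar m alpha Phi t <= 0).
 { intros t. rewrite (impulse_eq N S L alpha) by (auto; lra). unfold hd.
   match goal with |- ?a + ?b + (?c + ?d) <= 0 => assert (a + c <= 0); [|assert (b + d <= 0); [|lra]] end.
   all: rewrite <- rsum_plus; apply Rle_trans with (rsum N (fun _ => 0)); [|rewrite rsum_zero; lra].
   all: apply rsum_le; intros j Hj.
   - assert (Hx := proj2 (col_step N L kP tP kQ tQ bbar m alpha Phi t (N + j)%nat HN HS HR HkP HtP HkQ HtQ Hb Hm Ha Hfl ltac:(lia))).
     assert (0 <= (1/tP)^2) by (apply pow_le; apply Rlt_le, Rdiv_lt_0_compat; lra). nra.
   - assert (Hx := proj2 (col_step N L kP tP kQ tQ bbar m alpha Phi t (N + N + j)%nat HN HS HR HkP HtP HkQ HtQ Hb Hm Ha Hfl ltac:(lia))).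
     assert (0 <= (1/tQ)^2) by (apply pow_le; apply Rlt_le, Rdiv_lt_0_compat; lra). nra. }
 destruct (Rle_lt_or_eq_dec 0 T HT) as [HTp|HT0].
 - destruct (MVT_cor2 (fun s => G s + hq N L kP tP kQ tQ bbar m alpha Phi s)
     (fun s => impulse_sq (3 * N) (2 * N) (2 * N) (sysA N L kP tP kQ tQ bbar) (sysB N tP tQ) (sysC N S alpha) Phi s
                  + hd N L kP tP kQ tQ bbar m alpha Phi s) 0 T HTp) as [c [Hc _]].
   { intros c _. apply dl_plus; auto. }
   pose proof (Hle c). pose proof (Hpos T). rewrite HG0 in Hc. nra.
 - subst T. rewrite HG0. auto.
Qed.

Definition ev (j : nat) : nat -> R := fun i => if Nat.eqb i j then 1 else 0.

Lemma qf_ext N L kap gam tQ u w alpha z z' : (forall l, (l < N + N + N)%nat -> z l = z' l) ->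
  qf N L kap gam tQ u w alpha z = qf N L kap gam tQ u w alpha z'.
Proof. intros H. unfold qf.
 assert (E1 : forall i, (i < N)%nat -> z i = z' i) by (intros; apply H; lia).
 assert (E2 : forall i, (i < N)%nat -> Uv N gam z i = Uv N gam z' i) by (intros; unfold Uv; rewrite !H by lia; auto).
 assert (E3 : forall i, (i < N)%nat -> Vv N z i = Vv N z' i) by (intros; unfold Vv; rewrite !H by lia; auto).
 rewrite (dot_ext N z (mv N L z) z' (mv N L z')); auto.
 rewrite (dot_ext N (Pi N (Uv N gam z)) (Pi N (Uv N gam z)) (Pi N (Uv N gam z')) (Pi N (Uv N gam z'))); try (apply Pi_ext; auto).
 rewrite (dot_ext N (Vv N z) (mv N L (Vv N z)) (Vv N z') (mv N L (Vv N z'))); auto.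
 rewrite (dot_ext N (Pi N (Vv N z)) (Pi N (Vv N z)) (Pi N (Vv N z')) (Pi N (Vv N z'))); try (apply Pi_ext; auto).
 auto.
 intros; apply mv_ext; auto.
 intros; apply mv_ext; auto.
Qed.

Lemma dot_zero_l N x y : (forall i, (i < N)%nat -> x i = 0) -> dot N x y = 0.
Proof. intros H. unfold dot. rewrite (rsum_ext _ _ (fun _ => 0)). apply rsum_zero. intros; rewrite H; auto; ring. Qed.

Lemma rsum_ev N j : (j < N)%nat -> rsum N (ev j) = 1.
Proof. intros. unfold ev. apply (rsum_delta N j (fun _ => 1)); auto. Qed.

Lemma dot_ev N j y : (j < N)%nat -> dot N (ev j) y = y j.
Proof. intros. unfold dot, ev. rewrite (rsum_ext _ _ (fun k => if Nat.eqb k j then y k else 0)).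
 apply rsum_delta; auto. intros; destruct (Nat.eqb k j); ring. Qed.

Lemma PiPi_ev N j : (j < N)%nat -> dot N (Pi N (ev j)) (Pi N (ev j)) = 1 - 1 / INR N.
Proof. intros Hj. rewrite dot_PiPi by lia. rewrite dot_Pi_l, rsum_ev, dot_ev by auto.
 unfold avg. rewrite rsum_ev by auto. unfold ev. rewrite Nat.eqb_refl. field.
 apply not_0_INR; lia. Qed.

Lemma Pi_zero N x : (forall i, (i < N)%nat -> x i = 0) -> dot N (Pi N x) (Pi N x) = 0.
Proof. intros H. apply dot_zero_l. intros i Hi. unfold Pi, avg. rewrite H by auto.
 rewrite (rsum_ext _ _ (fun _ => 0)) by auto. rewrite rsum_zero. unfold Rdiv; ring. Qed.

Lemma qf_e1 N L kap gam tQ u w alpha j : (j < N)%nat ->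
  qf N L kap gam tQ u w alpha (fun l => eye l (N + j)%nat) = alpha/(2*kap*gam) * (1 - 1 / INR N).
Proof. intros Hj. unfold qf.
 rewrite (dot_zero_l N (fun l => eye l (N + j)%nat)) by (intros; unfold eye; nat_cases; auto).
 rewrite (dot_zero_l N (Vv N _)) by (intros; unfold Vv, eye; nat_cases; auto).
 rewrite (Pi_zero N (Vv N _)) by (intros; unfold Vv, eye; nat_cases; auto).
 rewrite (dot_ext N _ _ (Pi N (ev j)) (Pi N (ev j))).
 rewrite PiPi_ev by auto. ring.
 all: apply Pi_ext; intros; unfold Uv, ev, eye; nat_cases; ring.
Qed.

Lemma qf_e2 N L kap gam tQ u w alpha j : (j < N)%nat ->
  qf N L kap gam tQ u w alpha (fun l => eye l (N + N + j)%nat) = alpha*tQ/2 * (u * L j j + w * (1 - 1 / INR N)).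
Proof. intros Hj. unfold qf.
 rewrite (dot_zero_l N (fun l => eye l (N + N + j)%nat)) by (intros; unfold eye; nat_cases; auto).
 rewrite (Pi_zero N (Uv N gam _)) by (intros; unfold Uv, eye; nat_cases; ring).
 rewrite (dot_ext N (Vv N _) (mv N L (Vv N _)) (ev j) (mv N L (ev j))).
 rewrite (dot_ext N (Pi N (Vv N _)) _ (Pi N (ev j)) (Pi N (ev j))).
 rewrite PiPi_ev, dot_ev by auto.
 assert (mv N L (ev j) j = L j j) as ->.
 { unfold mv. rewrite (rsum_ext _ _ (fun k => if Nat.eqb k j then L j k else 0)).
   apply rsum_delta; auto. intros; unfold ev; destruct (Nat.eqb k j); ring. }
 ring.
 all: try (apply Pi_ext; intros; unfold Vv, ev, eye; nat_cases; ring).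
 all: intros; try apply mv_ext; intros; unfold Vv, ev, eye; nat_cases; ring.
Qed.

Lemma path_w_sym b i j : path_w b i j = path_w b j i.
Proof. unfold path_w. nat_cases; auto. Qed.

Lemma path_w_diag b i : path_w b i i = 0.
Proof. unfold path_w. nat_cases; auto. Qed.

Lemma lapB_sym N b : msym N (lapB N b).
Proof. intros i j _ _. unfold lapB. nat_cases; subst; auto. rewrite path_w_sym; auto. Qed.

Lemma lapB_row N b i : (i < N)%nat -> rsum N (fun j => lapB N b i j) = 0.
Proof. intros Hi. unfold lapB.
 rewrite (rsum_ext _ _ (fun j => (if Nat.eqb j i then rsum N (fun k => path_w b i k) else 0) - path_w b i j)).
 rewrite rsum_minus, rsum_delta by auto. apply Rminus_diag_eq; auto.
 intros k Hk. nat_cases; subst; rewrite ?path_w_diag; ring.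
Qed.

Lemma trace_path b n : rsum n (fun i => rsum n (fun k => path_w b i k)) = 2 * rsum (n - 1) b.
Proof. induction n as [|n IH]. simpl; ring.
 simpl rsum at 1. 
 rewrite rsum_plus, IH. simpl rsum. rewrite path_w_diag.
 destruct n as [|n]. simpl. ring.
 rewrite (rsum_ext (S n) (fun i => path_w b i (S n)) (fun i => if Nat.eqb i n then b i else 0)).
 rewrite (rsum_ext (S n) (fun k => path_w b (S n) k) (fun k => if Nat.eqb k n then b k else 0)).
 rewrite !rsum_delta by lia. replace (S (S n) - 1)%nat with (S n) by lia. replace (S n - 1)%nat with n by lia.
 simpl rsum. ring.
 all: intros k Hk; unfold path_w; nat_cases; subst; auto.
Qed.

Lemma trace_lapB N b : rsum N (fun j => lapB N b j j) = 2 * rsum (N - 1) b.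
Proof. rewrite <- trace_path. apply rsum_ext. intros; unfold lapB; rewrite Nat.eqb_refl; auto. Qed.

Lemma hq0_eq N L kP tP kQ tQ bbar m alpha (Phi : R -> Mat) : (0 < N)%nat ->
  (forall i j, (i < 3 * N)%nat -> (j < 3 * N)%nat -> Phi 0 i j = eye i j) ->
  hq N L kP tP kQ tQ bbar m alpha Phi 0 =
  INR N * ((1/tP)^2 * (alpha/(2*(kP/tP)*(1/tP)) * (1 - 1/INR N)))
  + (1/tQ)^2 * (alpha*tQ/2) * (uu (cQ kQ bbar) kQ m * rsum N (fun j => L j j) + INR N * (ww (cQ kQ bbar) kQ m * (1 - 1/INR N))).
Proof. intros HN H0. unfold hq.
 rewrite (rsum_ext N _ (fun j => (1/tP)^2 * (alpha/(2*(kP/tP)*(1/tP)) * (1 - 1/INR N)))).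
 rewrite (rsum_ext N (fun j => (1/tQ)^2 * _) (fun j => ((1/tQ)^2 * (alpha*tQ/2) * uu (cQ kQ bbar) kQ m) * L j j + (1/tQ)^2 * (alpha*tQ/2) * ww (cQ kQ bbar) kQ m * (1 - 1/INR N))).
 rewrite rsum_plus, !rsum_scal, !rsum_const. ring.
 - intros j Hj. rewrite (qf_ext _ _ _ _ _ _ _ _ _ (fun l => eye l (N + N + j)%nat)).
   rewrite qf_e2 by auto. ring. intros l Hl. unfold col. apply H0; lia.
 - intros j Hj. rewrite (qf_ext _ _ _ _ _ _ _ _ _ (fun l => eye l (N + j)%nat)).
   rewrite qf_e1 by auto. auto. intros l Hl. unfold col. apply H0; lia.
Qed.

Definition Bnd N b kP tQ kQ bbar alpha :=
  alpha / 2 * INR (N - 1) * (1 / kP + 1 / (tQ * (cQ kQ bbar / (2 * bmean N b) + kQ))).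

Lemma main_bound N b Sq kP tP kQ tQ bbar alpha (Phi : R -> Mat) (G : R -> R) :
  (2 <= N)%nat ->
  (forall i, (i < N - 1)%nat -> 0 < b i) ->
  0 < kP -> 0 < tP -> 0 < kQ -> 0 < tQ -> 0 <= bbar -> 0 < alpha ->
  is_psd_sqrt N (lapB N b) Sq ->
  is_exp_flow (3 * N) (sysA N (lapB N b) kP tP kQ tQ bbar) Phi ->
  G 0 = 0 ->
  (forall t, derivable_pt_lim G t (impulse_sq (3 * N) (2 * N) (2 * N) (sysA N (lapB N b) kP tP kQ tQ bbar) (sysB N tP tQ) (sysC N Sq alpha) Phi t)) ->
  forall T, 0 <= T -> G T <= Bnd N b kP tQ kQ bbar alpha.
Proof. intros HN Hb HkP HtP HkQ HtQ Hbb Ha [HSs [_ HSS]] Hfl HG0 HG T HT.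
 assert (HN0 : (0 < N)%nat) by lia.
 assert (HX : 0 < rsum (N - 1) b).
 { replace (N - 1)%nat with (Datatypes.S (N - 2)%nat) by lia. simpl.
   assert (0 <= rsum (N - 2)%nat b) by (apply rsum_nonneg; intros; apply Rlt_le, Hb; lia).
   assert (0 < b (N - 2)%nat) by (apply Hb; lia). lra. }
 assert (Hn1 : 0 < INR (N - 1)) by (apply lt_0_INR; lia).
 set (m := 2 * bmean N b).
 assert (Hm : 0 < m) by (unfold m, bmean; apply Rmult_lt_0_compat; [lra|apply Rdiv_lt_0_compat; auto]).
 assert (HP : forall x, 0 <= dot N x (mv N (lapB N b) x)).
 { intros x. rewrite <- (sq_S N Sq (lapB N b)) by auto. apply dot_nonneg. }
 eapply Rle_trans.
 apply (G_bound N (lapB N b) Sq kP tP kQ tQ bbar m alpha Phi G); auto.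
 apply lapB_sym. apply lapB_row.
 rewrite hq0_eq by (auto; apply (proj1 Hfl)).
 rewrite trace_lapB.
 assert (Hcq : 0 < cQ kQ bbar) by (unfold cQ; nra).
 unfold Bnd, uu, ww, Dm. fold m. unfold m, bmean in *.
 rewrite minus_INR by lia. rewrite minus_INR in Hn1 by lia. simpl INR in *.
 assert (0 < INR N) by (apply lt_0_INR; lia).
 set (X := rsum (N - 1) b) in *. set (c := cQ kQ bbar) in *.
 assert (0 < c + kQ * (2 * (X / (INR N - 1)))) by (assert (0 < X / (INR N - 1)) by (apply Rdiv_lt_0_compat; lra); nra).
 right. field.
 repeat split; try lra.
 assert (0 < c * (INR N - 1) + kQ * 2 * X) by nra.
 intro Hc. 
 assert (c / (2 * (X / (INR N - 1))) + kQ = (c * (INR N - 1) + kQ * 2 * X) / (2 * X)) by (field; lra).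
 assert (0 < (c * (INR N - 1) + kQ * 2 * X) / (2 * X)) by (apply Rdiv_lt_0_compat; lra). lra.
Qed.

Fixpoint mpow (n : nat) (A : Mat) (k : nat) : Mat :=
  match k with O => eye | S k => mmul n A (mpow n A k) end.
Definition coef n A i j : nat -> R := fun k => mpow n A k i j / INR (Factorial.fact k).
Definition PhiE n A : R -> Mat := fun t i j => PSeries (coef n A i j) t.
Definition KA n (A : Mat) := rsum n (fun i => rsum n (fun l => Rabs (A i l))).

Lemma rsum_single_le n f i : (i < n)%nat -> (forall k, (k < n)%nat -> 0 <= f k) -> f i <= rsum n f.
Proof. induction n; intros Hi H; [lia|]. simpl.
 destruct (Nat.eq_dec i n). subst. assert (0 <= rsum n f) by (apply rsum_nonneg; intros; apply H; lia). lra.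
 assert (f i <= rsum n f) by (apply IHn; [lia|intros; apply H; lia]). assert (0 <= f n) by (apply H; lia). lra. Qed.

Lemma KA_nonneg n A : 0 <= KA n A.
Proof. unfold KA. apply rsum_nonneg; intros; apply rsum_nonneg; intros; apply Rabs_pos. Qed.

Lemma mpow_bound n A k : forall i j, (i < n)%nat -> Rabs (mpow n A k i j) <= (KA n A) ^ k.
Proof. induction k; intros i j Hi; simpl.
 - unfold eye. destruct (Nat.eqb i j); rewrite ?Rabs_R1, ?Rabs_R0; lra.
 - unfold mmul. eapply Rle_trans. apply rsum_abs.
   apply Rle_trans with (rsum n (fun l => Rabs (A i l)) * KA n A ^ k).
   + rewrite <- rsum_scal_r. apply rsum_le. intros l Hl. rewrite Rabs_mult.
     apply Rmult_le_compat_l. apply Rabs_pos. apply IHk; auto.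
   + apply Rmult_le_compat_r. apply pow_le, KA_nonneg.
     unfold KA. apply (rsum_single_le n (fun i => rsum n (fun l => Rabs (A i l)))); auto.
     intros; apply rsum_nonneg; intros; apply Rabs_pos.
Qed.

Lemma seq_bounded (u : nat -> R) : Un_cv u 0 -> exists M, forall k, u k <= M.
Proof. intros H. destruct (cauchy_bound u (CV_Cauchy u (exist _ 0 H))) as [M HM].
 exists M. intros k. apply HM. exists k; auto. Qed.

Lemma coef_radius n A i j x : (i < n)%nat -> Rbar_lt (Rabs x) (CV_radius (coef n A i j)).
Proof. intros Hi. set (r := Rabs x + 1).
 assert (Hr : 0 <= r) by (unfold r; pose proof (Rabs_pos x); lra).
 apply Rbar_lt_le_trans with (Finite r). simpl; unfold r; lra.
 apply (proj1 (CV_radius_bounded (coef n A i j))).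
 destruct (seq_bounded _ (cv_speed_pow_fact (KA n A * r))) as [M HM].
 exists M. intros k. eapply Rle_trans; [|apply (HM k)].
 unfold coef. rewrite Rabs_mult, Rabs_div, (Rabs_right (INR (Factorial.fact k))).
 rewrite <- RPow_abs, (Rabs_right r) by lra. rewrite Rpow_mult_distr.
 unfold Rdiv. rewrite Rmult_assoc, (Rmult_comm (/ _)), <- Rmult_assoc.
 apply Rmult_le_compat_r. apply Rlt_le, Rinv_0_lt_compat, INR_fact_lt_0.
 rewrite (Rmult_comm _ (r ^ k)), (Rmult_comm _ (r ^ k)). apply Rmult_le_compat_l. apply pow_le; auto.
 apply mpow_bound; auto.
 apply Rle_ge, pos_INR. apply INR_fact_neq_0.
Qed.

Lemma is_pseries_rsum n A i j t : forall m, (m <= n)%nat -> (0 < n)%nat ->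
  is_pseries (fun k => rsum m (fun l => A i l * coef n A l j k)) t
    (rsum m (fun l => A i l * PSeries (coef n A l j) t)).
Proof. induction m; intros Hm Hn.
 - simpl. assert (H0 := PSeries_correct (coef n A 0 j) t (CV_radius_inside _ _ (coef_radius n A 0 j t Hn))).
   apply (is_pseries_scal 0) in H0; [|apply Rmult_comm].
   match type of H0 with is_pseries _ _ ?l => replace l with 0 in H0 by (symmetry; apply Rmult_0_l) end.
   eapply is_pseries_ext; [|exact H0]. intros k. unfold PS_scal. apply Rmult_0_l.
 - simpl.
   assert (H1 := PSeries_correct (coef n A m j) t (CV_radius_inside _ _ (coef_radius n A m j t ltac:(lia)))).
   apply (is_pseries_scal (A i m)) in H1; [|apply Rmult_comm].
   assert (H2 := is_pseries_plus _ _ _ _ _ (IHm ltac:(lia) Hn) H1).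
   eapply is_pseries_ext; [|exact H2]. intros k. reflexivity.
Qed.

Lemma PhiE_flow n A : is_exp_flow n A (PhiE n A).
Proof. split.
 - intros i j _ _. unfold PhiE. rewrite PSeries_0. unfold coef. simpl. field.
 - intros t i j Hi Hj. apply is_derive_Reals. unfold PhiE.
   replace (mmul n A (fun i0 j0 => PSeries (coef n A i0 j0) t) i j) with (PSeries (PS_derive (coef n A i j)) t).
   apply is_derive_PSeries. apply coef_radius; auto.
   rewrite (PSeries_ext _ (fun k => rsum n (fun l => A i l * coef n A l j k))).
   apply is_pseries_unique. apply is_pseries_rsum; lia.
   intros k. unfold PS_derive, coef. simpl mpow. unfold mmul. 
   unfold Rdiv. rewrite <- rsum_scal_r. rewrite <- (rsum_scal n (INR (S k))).
   apply rsum_ext. intros l _.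
   change (Factorial.fact (S k)) with (S k * Factorial.fact k)%nat. rewrite mult_INR.
   field. split. apply INR_fact_neq_0. apply not_0_INR; lia.
Qed.

Lemma cont_sq f t : continuity_pt f t -> continuity_pt (fun s => f s ^ 2) t.
Proof. intros H. apply (continuity_pt_locally_ext (fun s => f s * f s) _ 1); [lra| intros; ring|].
 apply (continuity_pt_mult f f); auto. Qed.

Lemma cont_cmul f c t : continuity_pt f t -> continuity_pt (fun s => c * f s) t.
Proof. intros H. apply (continuity_pt_scal f c); auto. Qed.
Lemma cont_mulc f c t : continuity_pt f t -> continuity_pt (fun s => f s * c) t.
Proof. intros H. apply (continuity_pt_locally_ext (fun s => c * f s) _ 1); [lra| intros; ring|].
 apply cont_cmul; auto. Qed.

Lemma imp_cont n m p A B C (Phi : R -> Mat) t : is_exp_flow n A Phi ->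
  continuity_pt (fun s => impulse_sq n m p A B C Phi s) t.
Proof. intros [_ Hfl]. unfold impulse_sq.
 apply (cont_rsum p (fun s i => rsum m (fun j => (mmul n (mmul n C (Phi s)) B i j) ^ 2))). intros i _.
 apply (cont_rsum m (fun s j => (mmul n (mmul n C (Phi s)) B i j) ^ 2)). intros j _.
 apply (cont_sq (fun s => mmul n (mmul n C (Phi s)) B i j)). unfold mmul.
 apply (cont_rsum n (fun s l => rsum n (fun l' => C i l' * Phi s l' l) * B l j)). intros l Hl.
 apply (cont_mulc (fun s => rsum n (fun l' => C i l' * Phi s l' l))).
 apply (cont_rsum n (fun s l' => C i l' * Phi s l' l)). intros l' Hl'.
 apply (cont_cmul (fun s => Phi s l' l)).
 apply derivable_continuous_pt. exists (mmul n A (Phi t) l' l). apply Hfl; auto.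
Qed.

Lemma imp_nonneg n m p A B C (Phi : R -> Mat) t : 0 <= impulse_sq n m p A B C Phi t.
Proof. unfold impulse_sq. apply rsum_nonneg; intros; apply rsum_nonneg; intros. apply pow2_ge_0. Qed.

Lemma mono_from_deriv (G f : R -> R) : (forall t, derivable_pt_lim G t (f t)) -> (forall t, 0 <= f t) ->
  forall a b, a <= b -> G a <= G b.
Proof. intros HG Hf a b Hab. destruct (Rle_lt_or_eq_dec a b Hab) as [Hlt|Heq].
 - destruct (MVT_cor2 G f a b Hlt) as [c [Hc _]]. intros; auto. pose proof (Hf c). nra.
 - subst; lra. Qed.

Lemma lim_exists (G : R -> R) (Bd : R) : (forall a b, a <= b -> G a <= G b) ->
  (forall T, 0 <= T -> G T <= Bd) ->
  exists v, forall eps, 0 < eps -> exists M, forall T, M <= T -> Rabs (G T - v) < eps.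
Proof. intros Hm Hb.
 set (E := fun y => exists T, 0 <= T /\ y = G T).
 destruct (completeness E) as [l [Hub Hlub]].
 - exists Bd. intros y [T [HT ->]]. auto.
 - exists (G 0). exists 0. split; auto; lra.
 - exists l. intros eps Heps.
   assert (exists T0, 0 <= T0 /\ l - eps < G T0) as [T0 [HT0 HG0]].
   { apply NNPP. intros Hn. assert (is_upper_bound E (l - eps)).
     { intros y [T [HT ->]]. apply Rnot_lt_le. intros Hc. apply Hn. exists T; auto. }
     pose proof (Hlub _ H). lra. }
   exists T0. intros T HT. assert (G T0 <= G T) by (apply Hm; auto).
   assert (G T <= l) by (apply Hub; exists T; split; auto; lra).
   apply Rabs_def1; lra.
Qed.

Theorem theorem4 (N : nat) (b : nat -> R) (S : Mat)
  (kP tP kQ tQ bbar alpha : R) :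
  (2 <= N)%nat ->
  (forall i, (i < N - 1)%nat -> 0 < b i) ->
  0 < kP -> 0 < tP -> 0 < kQ -> 0 < tQ -> 0 <= bbar -> 0 < alpha ->
  is_psd_sqrt N (lapB N b) S ->
  (exists v, H_is_H2sq N b S kP tP kQ tQ bbar alpha v) /\
  (forall v, H_is_H2sq N b S kP tP kQ tQ bbar alpha v ->
     v <= alpha / 2 * INR (N - 1) *
          (1 / kP + 1 / (tQ * (cQ kQ bbar / (2 * bmean N b) + kQ)))).
Proof. intros HN Hb HkP HtP HkQ HtQ Hbb Ha Hpsd.
 rename S into Sq.
 fold (Bnd N b kP tQ kQ bbar alpha).
 split.
 - set (Phi := PhiE (3 * N) (sysA N (lapB N b) kP tP kQ tQ bbar)).
   assert (Hfl : is_exp_flow (3 * N) (sysA N (lapB N b) kP tP kQ tQ bbar) Phi) by apply PhiE_flow.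
   set (f := fun s => impulse_sq (3 * N) (2 * N) (2 * N) (sysA N (lapB N b) kP tP kQ tQ bbar) (sysB N tP tQ) (sysC N Sq alpha) Phi s).
   assert (Hc : forall t, continuous f t).
   { intros t. apply continuity_pt_filterlim. apply imp_cont; auto. }
   set (Gf := fun T => RInt f 0 T).
   assert (HG0 : Gf 0 = 0) by (unfold Gf; exact (RInt_point 0 f)).
   assert (HGd : forall t, derivable_pt_lim Gf t (f t)).
   { intros t. apply is_derive_Reals. apply (is_derive_RInt f Gf 0); auto.
     apply filter_forall. intros x. unfold Gf. apply (RInt_correct f). apply ex_RInt_continuous. intros; auto. }
   assert (Hbd := main_bound N b Sq kP tP kQ tQ bbar alpha Phi Gf HN Hb HkP HtP HkQ HtQ Hbb Ha Hpsd Hfl HG0 HGd).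
   assert (Hmono := mono_from_deriv Gf f HGd (fun t => imp_nonneg _ _ _ _ _ _ _ _)).
   destruct (lim_exists Gf _ Hmono Hbd) as [v Hv].
   exists v. exists Phi. split; auto. exists Gf. auto.
 - intros v [Phi [Hfl [Gf [HG0 [HGd Hlim]]]]].
   assert (Hbd := main_bound N b Sq kP tP kQ tQ bbar alpha Phi Gf HN Hb HkP HtP HkQ HtQ Hbb Ha Hpsd Hfl HG0 HGd).
   apply Rnot_lt_le. intros Hlt.
   destruct (Hlim (v - Bnd N b kP tQ kQ bbar alpha)) as [M HM]. lra.
   pose proof (HM (Rmax M 0) (Rmax_l M 0)). pose proof (Hbd (Rmax M 0) (Rmax_r M 0)).
   apply Rabs_def2 in H. lra.
Qed.
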